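(* Consider the network with vertices $s_1,s_2,s_3,t$ and directed edges $(s_3,s_1),(s_3,s_2),(s_1,t),(s_2,t)$, messages $X_1^k,X_2^k,X_3^k$ with all $3k$ components i.i.d. uniform on a finite alphabet $\mathcal{A}$, a demand function $f:\mathcal{A}^3\to\mathcal{B}$ applied componentwise, and a source-network code computing $f(X_1^k,X_2^k,X_3^k)$ at $t$ with zero error. Let $\mathbf{b}\in\mathcal{B}^k$ and $\mathbf{a}_3\in A_3(\mathbf{b})$. Define the vector $\mathbf{h}_{\mathbf{b},\mathbf{a}_3}\in\mathbb{R}^{M(\mathbf{a}_3,\mathbf{b})}$ whose first $|\mathcal{V}_{12}(\mathbf{a}_3,\mathbf{b})|$ entries are the numbers $h_{\mathbf{a}_3}(C,D)$, $(C,D)\in\mathcal{V}_{12}(\mathbf{a}_3,\mathbf{b})$, listed in non-increasing order, followed by $M(\mathbf{a}_3,\mathbf{b})-|\mathcal{V}_{12}(\mathbf{a}_3,\mathbf{b})|$ zeros. Then every conditional p.m.f. $\mathbf{p}\in\mathbb{R}_{\ge0}^{M(\mathbf{a}_3,\mathbf{b})}$ on the $M(\mathbf{a}_3,\mathbf{b})$ valid $(\mathbf{z}_1,\mathbf{z}_2)$-labels, given $f(X_1^k,X_2^k,X_3^k)=\mathbf{b}$ and $X_3^k=\mathbf{a}_3$, satisfies $\mathbf{p}\prec\mathbf{h}_{\mathbf{b},\mathbf{a}_3}/|A_{123}(\mathbf{b},\mathbf{a}_3)|$.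
   Context: A source-network code consists of encoders $\phi_{(s_3,s_1)},\phi_{(s_3,s_2)}:\mathcal{A}^k\to\mathcal{Z}^*$, $\phi_{(s_1,t)},\phi_{(s_2,t)}:\mathcal{A}^k\times\mathcal{Z}^*\to\mathcal{Z}^*$ ($\mathcal{Z}^*$ = finite sequences over a finite alphabet $\mathcal{Z}$) and a decoder $\psi_t$; $\mathbf{Z}_u=\phi_{(s_u,t)}(X_u^k,\phi_{(s_3,s_u)}(X_3^k))$, $u=1,2$; zero error means $\Pr\{\psi_t(\mathbf{Z}_1,\mathbf{Z}_2)\ne f(X_1^k,X_2^k,X_3^k)\}=0$. For $a_3\in\mathcal{A}$: $x\equiv^{a_3}y|_1$ iff $f(x,z,a_3)=f(y,z,a_3)$ for all $z\in\mathcal{A}$; $x\equiv^{a_3}y|_2$ iff $f(z,x,a_3)=f(z,y,a_3)$ for all $z$. For vectors, $\mathbf{x}_u\equiv^{\mathbf{a}_3}\mathbf{y}_u|_u$ iff componentwise equivalent under $\equiv^{a_3^{(j)}}|_u$. $A_3(\mathbf{b})=\{\mathbf{a}_3\in\mathcal{A}^k:\exists\mathbf{x}_1,\mathbf{x}_2,\ f(\mathbf{x}_1,\mathbf{x}_2,\mathbf{a}_3)=\mathbf{b}\}$; $A_{123}(\mathbf{b},\mathbf{a}_3)$ is the set of message tuples $(\mathbf{x}_1,\mathbf{x}_2,\mathbf{a}_3)$ with $f(\mathbf{x}_1,\mathbf{x}_2,\mathbf{a}_3)=\mathbf{b}$. $\mathcal{V}_{12}(\mathbf{a}_3,\mathbf{b})$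 is the set of pairs $(C,D)$ where $C$ is a class of $\equiv^{\mathbf{a}_3}|_1$, $D$ a class of $\equiv^{\mathbf{a}_3}|_2$, and there exist $\mathbf{x}_1\in C,\mathbf{x}_2\in D$ with $f(\mathbf{x}_1,\mathbf{x}_2,\mathbf{a}_3)=\mathbf{b}$; for such a pair, $h_{\mathbf{a}_3}(C,D)=|\{(\mathbf{x}_1,\mathbf{x}_2)\in C\times D: f(\mathbf{x}_1,\mathbf{x}_2,\mathbf{a}_3)=\mathbf{b}\}|$ (which equals $|C|\cdot|D|$). $M(\mathbf{a}_3,\mathbf{b})$ is the number of distinct pairs $(\mathbf{Z}_1,\mathbf{Z}_2)$ used by the code on tuples in $A_{123}(\mathbf{b},\mathbf{a}_3)$; for a zero-error code $M(\mathbf{a}_3,\mathbf{b})\ge|\mathcal{V}_{12}(\mathbf{a}_3,\mathbf{b})|$. Majorization: $\mathbf{p}\prec\mathbf{q}$ (same length $l$) iff the sum of the $t$ largest entries of $\mathbf{p}$ is at most that of $\mathbf{q}$ for $t=1,\ldots,l-1$ and the total sums are equal. *)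

(* Defs.v *)
From HB Require Import structures.
From mathcomp Require Import all_boot all_order all_algebra.
Set Implicit Arguments. Unset Strict Implicit. Unset Printing Implicit Defensive.
Import Order.TTheory GRing.Theory Num.Theory.
Local Open Scope ring_scope.

Section Defs.
Variables (A : finType) (B : eqType) (k : nat).
Variable (f : A -> A -> A -> B).

Definition vecA := {ffun 'I_k -> A}.
Definition vecB := {ffun 'I_k -> B}.

Definition fvec (x1 x2 x3 : vecA) : vecB := [ffun j => f (x1 j) (x2 j) (x3 j)].

Definition omega := (vecA * vecA * vecA)%type.

(* All 3k components i.i.d. uniform on A  =  uniform distribution on omega. *)
Definition Pr (R : realFieldType) (E : {set omega}) : R := #|E|%:R / #|[set: omega]|%:R.

Definition condPr (R : realFieldType) (E C : {set omega}) : R :=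
  Pr R (E :&: C) / Pr R C.

Definition equiv1 (a3 x y : A) : bool := [forall z, f x z a3 == f y z a3].
Definition equiv2 (a3 x y : A) : bool := [forall z, f z x a3 == f z y a3].

Definition vequiv1 (a3 x y : vecA) : bool := [forall j, equiv1 (a3 j) (x j) (y j)].
Definition vequiv2 (a3 x y : vecA) : bool := [forall j, equiv2 (a3 j) (x j) (y j)].

Definition is_class1 (a3 : vecA) (C : {set vecA}) : bool :=
  [exists x, C == [set y | vequiv1 a3 x y]].
Definition is_class2 (a3 : vecA) (D : {set vecA}) : bool :=
  [exists x, D == [set y | vequiv2 a3 x y]].

Definition A3set (b : vecB) : {set vecA} :=
  [set a3 | [exists x1, exists x2, fvec x1 x2 a3 == b]].

Definition A123 (b : vecB) (a3 : vecA) : {set omega} :=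
  [set x : omega | (fvec x.1.1 x.1.2 x.2 == b) && (x.2 == a3)].

Definition V12 (a3 : vecA) (b : vecB) : {set {set vecA} * {set vecA}} :=
  [set CD : {set vecA} * {set vecA} |
     [&& is_class1 a3 CD.1, is_class2 a3 CD.2 &
         [exists x1 in CD.1, exists x2 in CD.2, fvec x1 x2 a3 == b]]].

Definition hval (a3 : vecA) (b : vecB) (CD : {set vecA} * {set vecA}) : nat :=
  #|[set x12 : vecA * vecA | (x12.1 \in CD.1) && (x12.2 \in CD.2)
                             && (fvec x12.1 x12.2 a3 == b)]|.

Variable Z : finType.
Record code := Code {
  phi31 : vecA -> seq Z;
  phi32 : vecA -> seq Z;
  phi1t : vecA -> seq Z -> seq Z;
  phi2t : vecA -> seq Z -> seq Z;
  psit  : seq Z -> seq Z -> vecB }.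

Definition label (c : code) (x : omega) : seq Z * seq Z :=
  (phi1t c x.1.1 (phi31 c x.2), phi2t c x.1.2 (phi32 c x.2)).

Definition error_event (c : code) : {set omega} :=
  [set x : omega | psit c (label c x).1 (label c x).2 != fvec x.1.1 x.1.2 x.2].

Definition zero_error (R : realFieldType) (c : code) : Prop :=
  Pr R (error_event c) = 0.

(* the valid labels used on A_123(b, a3), and their number M(a3, b) *)
Definition labels (c : code) (a3 : vecA) (b : vecB) : seq (seq Z * seq Z) :=
  undup [seq label c x | x <- enum (A123 b a3)].
Definition Mnum (c : code) (a3 : vecA) (b : vecB) : nat := size (labels c a3 b).

Definition label_event (c : code) (l : seq Z * seq Z) : {set omega} :=
  [set x : omega | label c x == l].

Definition hvec (R : realFieldType) (c : code) (a3 : vecA) (b : vecB) : seq R :=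
  sort (fun u v : R => v <= u) [seq (hval a3 b CD)%:R | CD <- enum (V12 a3 b)]
  ++ nseq (Mnum c a3 b - #|V12 a3 b|) 0.
End Defs.

Definition topsum (R : realFieldType) (t : nat) (s : seq R) : R :=
  \sum_(u <- take t (sort (fun u v : R => v <= u) s)) u.

Definition majorized (R : realFieldType) (p q : seq R) : Prop :=
  size p = size q /\
  (forall t, (1 <= t < size p)%N -> topsum t p <= topsum t q) /\
  \sum_(u <- p) u = \sum_(u <- q) u.

(* Main.v *)
Require Import Defs.
From HB Require Import structures.
From mathcomp Require Import all_boot all_order all_algebra ring.
Import Order.TTheory GRing.Theory Num.Theory.
Local Open Scope ring_scope.
Definition geR (R : realFieldType) := fun u v : R => v <= u.

Lemma geR_total (R : realFieldType) : total (@geR R).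
Proof. by move=> u v; rewrite /geR orbC le_total. Qed.

Lemma geR_trans (R : realFieldType) : transitive (@geR R).
Proof. by move=> y x z; rewrite /geR => h1 h2; exact: le_trans h2 h1. Qed.

Lemma geR_anti (R : realFieldType) : antisymmetric (@geR R).
Proof. by move=> x y; rewrite /geR => /andP[h1 h2]; apply/eqP; rewrite eq_le h1 h2. Qed.

Lemma topsum_sorted (R : realFieldType) (s : seq R) :
  sorted (@geR R) s -> all (fun x => 0 <= x) s ->
  forall (u : seq R) t, subseq u s -> (size u <= t)%N ->
  \sum_(x <- u) x <= \sum_(x <- take t s) x.
Proof.
elim: s => [|x s IH] Hs Hnn u t.
  by rewrite subseq0 => /eqP ->; rewrite /= big_nil.
have Hs' : sorted (@geR R) s by apply: (path_sorted Hs).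
move: Hnn => /= /andP[x0 Hnn].
have Hall := order_path_min (@geR_trans R) Hs.
case: t => [|t].
  by case: u => //= _ _ _; rewrite !big_nil.
rewrite /= big_cons.
have Htake0 : 0 <= \sum_(y <- take t s) y.
  rewrite big_seq; apply: sumr_ge0 => y /mem_take Hy.
  by move/allP: Hnn => /(_ y Hy).
case: u => [|y u] /=.
  by move=> _ _; rewrite big_nil addr_ge0.
case: eqP => [-> | _] Hsub Hsz.
  by rewrite big_cons lerD2l; apply: IH.
rewrite big_cons; apply: lerD.
  by move/allP: Hall; apply; apply: (mem_subseq Hsub); rewrite inE eqxx.
apply: IH => //; apply: subseq_trans Hsub; exact: subseq_cons.
Qed.

Lemma topsum_perm (R : realFieldType) t (q q' : seq R) :
  perm_eq q q' -> topsum t q = topsum t q'.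
Proof.
move=> Hp; rewrite /topsum.
have -> : sort (fun u v : R => v <= u) q = sort (fun u v : R => v <= u) q'; last by [].
exact: (perm_sortP (@geR_total R) (@geR_trans R) (@geR_anti R)).
Qed.

Lemma topsum_ge (R : realFieldType) t (q q' u : seq R) :
  all (fun x => 0 <= x) q' -> perm_eq q q' -> subseq u q' -> (size u <= t)%N ->
  \sum_(x <- u) x <= topsum t q.
Proof.
move=> Hnn Hp Hsub Hsz; rewrite (@topsum_perm R t _ _ Hp) /topsum.
rewrite -(perm_big _ (permEl (perm_sort (@geR R) u))).
apply: topsum_sorted.
- exact: sort_sorted (@geR_total R) _.
- by rewrite (eq_all_r (perm_mem (permEl (perm_sort _ _)))).
- exact: subseq_sort (@geR_total R) (@geR_trans R) _ _ Hsub.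
- by rewrite size_sort.
Qed.
Set Implicit Arguments. Unset Strict Implicit. Unset Printing Implicit Defensive.
Lemma ve1_refl (A : finType) (B : eqType) k (f : A -> A -> A -> B) (a3 x : vecA A k) :
  vequiv1 f a3 x x.
Proof. by apply/forallP => j; apply/forallP => z. Qed.
Lemma ve1_sym (A : finType) (B : eqType) k (f : A -> A -> A -> B) (a3 x y : vecA A k) :
  vequiv1 f a3 x y -> vequiv1 f a3 y x.
Proof.
move/forallP => H; apply/forallP => j; apply/forallP => z.
by move/forallP: (H j) => /(_ z) /eqP ->.
Qed.
Lemma ve1_trans (A : finType) (B : eqType) k (f : A -> A -> A -> B) (a3 x y w : vecA A k) :
  vequiv1 f a3 x y -> vequiv1 f a3 y w -> vequiv1 f a3 x w.
Proof.
move/forallP => H1 /forallP H2; apply/forallP => j; apply/forallP => z.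
by move/forallP: (H1 j) => /(_ z) /eqP ->; move/forallP: (H2 j) => /(_ z).
Qed.
Lemma ve2_refl (A : finType) (B : eqType) k (f : A -> A -> A -> B) (a3 x : vecA A k) :
  vequiv2 f a3 x x.
Proof. by apply/forallP => j; apply/forallP => z. Qed.
Lemma ve2_sym (A : finType) (B : eqType) k (f : A -> A -> A -> B) (a3 x y : vecA A k) :
  vequiv2 f a3 x y -> vequiv2 f a3 y x.
Proof.
move/forallP => H; apply/forallP => j; apply/forallP => z.
by move/forallP: (H j) => /(_ z) /eqP ->.
Qed.
Lemma ve2_trans (A : finType) (B : eqType) k (f : A -> A -> A -> B) (a3 x y w : vecA A k) :
  vequiv2 f a3 x y -> vequiv2 f a3 y w -> vequiv2 f a3 x w.
Proof.
move/forallP => H1 /forallP H2; apply/forallP => j; apply/forallP => z.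
by move/forallP: (H1 j) => /(_ z) /eqP ->; move/forallP: (H2 j) => /(_ z).
Qed.

Definition cls1 (A : finType) (B : eqType) k (f : A -> A -> A -> B) (a3 x : vecA A k)
  : {set vecA A k} := [set y | vequiv1 f a3 x y].
Definition cls2 (A : finType) (B : eqType) k (f : A -> A -> A -> B) (a3 x : vecA A k)
  : {set vecA A k} := [set y | vequiv2 f a3 x y].

Lemma cls1_eq (A : finType) (B : eqType) k (f : A -> A -> A -> B) (a3 x y : vecA A k) :
  vequiv1 f a3 x y -> cls1 f a3 x = cls1 f a3 y.
Proof.
move=> H; apply/setP => z; rewrite !inE; apply/idP/idP => Hz.
  exact: ve1_trans (ve1_sym H) Hz.
exact: ve1_trans H Hz.
Qed.
Lemma cls2_eq (A : finType) (B : eqType) k (f : A -> A -> A -> B) (a3 x y : vecA A k) :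
  vequiv2 f a3 x y -> cls2 f a3 x = cls2 f a3 y.
Proof.
move=> H; apply/setP => z; rewrite !inE; apply/idP/idP => Hz.
  exact: ve2_trans (ve2_sym H) Hz.
exact: ve2_trans H Hz.
Qed.

Definition blk (A : finType) (B : eqType) k (f : A -> A -> A -> B) (a3 : vecA A k)
  (x : omega A k) := (cls1 f a3 x.1.1, cls2 f a3 x.1.2).

Lemma zero_error_all (R : realFieldType) (A : finType) (B : eqType) (Z : finType)
    k (f : A -> A -> A -> B) (c : code A B k Z) :
  zero_error f R c -> forall x, psit c (label c x).1 (label c x).2 = fvec f x.1.1 x.1.2 x.2.
Proof.
move=> Hz x; apply/eqP; apply/negPn/negP => Hx.
have HxE : x \in error_event f c by rewrite inE.
move: Hz; rewrite /zero_error /Pr => /eqP; rewrite mulf_eq0 invr_eq0 !pnatr_eq0.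
case/orP => /eqP; last by move=> /card0_eq /(_ x); rewrite inE.
by move/card0_eq => /(_ x); rewrite HxE.
Qed.

Lemma blk_label (R : realFieldType) (A : finType) (B : eqType) (Z : finType)
    k (f : A -> A -> A -> B) (c : code A B k Z) (b : vecB B k) (a3 : vecA A k) :
  zero_error f R c -> forall x y, x \in A123 f b a3 -> y \in A123 f b a3 ->
  label c x = label c y -> blk f a3 x = blk f a3 y.
Proof.
move=> /zero_error_all Hz [[x1 x2] x3] [[y1 y2] y3].
rewrite !inE /= => /andP[_ /eqP ->] /andP[_ /eqP ->].
rewrite /label /= => [[H1 H2]].
rewrite /blk /=; congr pair.
  apply: cls1_eq; apply/forallP => j; apply/forallP => z.
  pose w : vecA A k := [ffun _ => z].
  have := Hz ((x1, w), a3); have := Hz ((y1, w), a3).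
  rewrite /label /= H1 => -> /(congr1 (fun g : vecB B k => g j)).
  by rewrite !ffunE => ->.
apply: cls2_eq; apply/forallP => j; apply/forallP => z.
pose w : vecA A k := [ffun _ => z].
have := Hz ((w, x2), a3); have := Hz ((w, y2), a3).
rewrite /label /= H2 => -> /(congr1 (fun g : vecB B k => g j)).
by rewrite !ffunE => ->.
Qed.
Lemma V12_blk (A : finType) (B : eqType) k (f : A -> A -> A -> B) (b : vecB B k) (a3 : vecA A k) :
  V12 f a3 b = blk f a3 @: A123 f b a3.
Proof.
apply/setP => [[C D]]; apply/idP/idP.
  rewrite inE /= => /and3P[/existsP[w /eqP->] /existsP[w' /eqP->]].
  case/existsP => x1 /andP[Hx1 /existsP[x2 /andP[Hx2 Hf]]].
  apply/imsetP; exists ((x1, x2), a3); first by rewrite inE /= Hf eqxx.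
  rewrite inE in Hx1; rewrite inE in Hx2.
  by rewrite /blk /= -(cls1_eq Hx1) -(cls2_eq Hx2).
case/imsetP => [[[x1 x2] x3]]; rewrite inE /= => /andP[Hf /eqP Hx3] [-> ->].
subst x3; rewrite inE /=; apply/and3P; split.
- by apply/existsP; exists x1.
- by apply/existsP; exists x2.
apply/existsP; exists x1; rewrite inE ve1_refl /=.
by apply/existsP; exists x2; rewrite inE ve2_refl.
Qed.

Lemma hval_blk (A : finType) (B : eqType) k (f : A -> A -> A -> B) (b : vecB B k) (a3 : vecA A k) j :
  j \in V12 f a3 b -> hval f a3 b j = #|[set x in A123 f b a3 | blk f a3 x == j]|.
Proof.
case: j => C D; rewrite inE /= => /and3P[/existsP[w /eqP HC] /existsP[w' /eqP HD] _].
rewrite /hval.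
set H := [set x12 : vecA A k * vecA A k | _].
have -> : [set x in A123 f b a3 | blk f a3 x == (C, D)] = (fun x12 => (x12, a3)) @: H.
  apply/setP => [[[x1 x2] x3]]; rewrite !inE /=; apply/idP/idP.
    case/andP => /andP[Hf /eqP Hx3]; subst x3; rewrite /blk /= => /eqP [H1 H2].
    apply/imsetP; exists (x1, x2) => //.
    by rewrite inE /= Hf -H1 -H2 !inE ve1_refl ve2_refl.
  case/imsetP => [[y1 y2]]; rewrite inE /= => /andP[/andP[Hy1 Hy2] Hf] [-> -> ->].
  rewrite Hf eqxx /=; apply/eqP; rewrite /blk /=.
  rewrite HC HD in Hy1 Hy2 *; rewrite inE in Hy1; rewrite inE in Hy2.
  by rewrite -(cls1_eq Hy1) -(cls2_eq Hy2).
by rewrite card_imset // => u v [].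
Qed.

Lemma E1 (A : finType) (B : eqType) (Z : finType) k (f : A -> A -> A -> B) (c : code A B k Z)
   (b : vecB B k) (a3 : vecA A k) (L : seq (seq Z * seq Z)) : uniq L ->
  (\sum_(l <- L) #|label_event c l :&: A123 f b a3|)%N =
  #|[set x in A123 f b a3 | label c x \in L]|.
Proof.
elim: L => [|l L IH] /=.
  move=> _; rewrite big_nil; apply: esym; apply/eqP; rewrite cards_eq0; apply/eqP/setP => x.
  by rewrite !inE andbF.
case/andP => Hl Hu; rewrite big_cons IH //.
rewrite -(cardsID (label_event c l) [set x in A123 f b a3 | label c x \in l :: L]).
congr (_ + _)%N; apply: eq_card => x; rewrite !inE.
  by case: (label c x == l); rewrite /= ?andbT ?andbF.
case: (label c x =P l) => [->|_] /=; first by rewrite (negbTE Hl) !andbF.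
by case: (_ \in L); case: (_ == b); case: (_ == a3).
Qed.

Lemma E2 (A : finType) (B : eqType) k (f : A -> A -> A -> B) (b : vecB B k) (a3 : vecA A k) (G : {set {set vecA A k} * {set vecA A k}}) :
  G \subset V12 f a3 b ->
  (\sum_(j in G) hval f a3 b j)%N = #|[set x in A123 f b a3 | blk f a3 x \in G]|.
Proof.
move=> HG.
rewrite -sum1_card (partition_big (blk f a3) (mem G)); last by move=> x; rewrite inE => /andP[].
apply: eq_bigr => j Hj; rewrite (hval_blk (subsetP HG j Hj)) -sum1_card.
apply: eq_bigl => x; rewrite !inE.
by case: (blk f a3 x =P j) => [->|]; rewrite ?andbF ?andbT ?Hj ?andbT.
Qed.

Definition gl (A : finType) (B : eqType) (Z : finType) k (f : A -> A -> A -> B) (c : code A B k Z)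
   (b : vecB B k) (a3 : vecA A k) (l : seq Z * seq Z) : {set vecA A k} * {set vecA A k} :=
  if [pick x | (x \in A123 f b a3) && (label c x == l)] is Some x then blk f a3 x
  else (set0, set0).

Lemma CL (R : realFieldType) (A : finType) (B : eqType) (Z : finType) k (f : A -> A -> A -> B)
   (c : code A B k Z) (b : vecB B k) (a3 : vecA A k) (L : seq (seq Z * seq Z)) :
  zero_error f R c ->
  (#|blk f a3 @: [set x in A123 f b a3 | label c x \in L]| <= size L)%N.
Proof.
move=> Hz.
have Hsub : blk f a3 @: [set x in A123 f b a3 | label c x \in L] \subset
            [seq gl f c b a3 l | l <- L].
  apply/subsetP => j /imsetP[x]; rewrite inE => /andP[HxA HxL] ->.
  have -> : blk f a3 x = gl f c b a3 (label c x).
    rewrite /gl; case: pickP => [y /andP[HyA /eqP Hy]|].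
      by apply: (blk_label Hz HxA HyA); rewrite Hy.
    by move/(_ x); rewrite HxA eqxx.
  exact: map_f.
apply: leq_trans (subset_leq_card Hsub) _.
by apply: leq_trans (card_size _) _; rewrite size_map.
Qed.
Unset Implicit Arguments. Set Strict Implicit.
Theorem lemma6 (R : realFieldType) (A : finType) (B : eqType) (Z : finType)
    (k : nat) (f : A -> A -> A -> B) (c : code A B k Z)
    (Hzero : zero_error f R c)
    (b : vecB B k) (a3 : vecA A k) (Ha3 : a3 \in A3set f b)
    (s : seq (seq Z * seq Z)) (Hs : perm_eq s (labels f c a3 b)) :
  majorized
    [seq condPr R (label_event c l) (A123 f b a3) | l <- s]
    [seq u / (#|A123 f b a3|)%:R | u <- hvec f R c a3 b].
Proof.
set N := #|A123 f b a3|.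
have [x0 Hx0] : exists x0, x0 \in A123 f b a3.
  move: Ha3; rewrite inE => /existsP[x1 /existsP[x2 Hf]].
  by exists ((x1, x2), a3); rewrite inE /= Hf eqxx.
have Npos : (0 < N)%N by apply/card_gt0P; exists x0.
have NR : (N%:R : R) != 0 by rewrite pnatr_eq0 -lt0n.
have Om : (#|[set: omega A k]|%:R : R) != 0.
  by rewrite pnatr_eq0 -lt0n; apply/card_gt0P; exists x0; rewrite inE.
set cnt := fun l => #|label_event c l :&: A123 f b a3|.
set F := fun l => (cnt l)%:R / (N%:R : R).
have Hp : [seq condPr R (label_event c l) (A123 f b a3) | l <- s] = map F s.
  apply: eq_map => l; rewrite /condPr /Pr /F /cnt -/N.
  by field; rewrite NR Om.
rewrite Hp.
set labs := labels f c a3 b.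
have Hulabs : uniq labs by exact: undup_uniq.
have Hus : uniq s by rewrite (perm_uniq Hs).
have HA : [set x in A123 f b a3 | label c x \in labs] = A123 f b a3.
  apply/setP => x; rewrite inE; case Hx: (x \in A123 f b a3) => //=.
  by rewrite mem_undup; apply: map_f; rewrite mem_enum.
have HV : (#|V12 f a3 b| <= size labs)%N.
  by rewrite V12_blk -{1}HA; exact: (CL _ _ _ Hzero).
have HVsub : forall x, x \in A123 f b a3 -> blk f a3 x \in V12 f a3 b.
  by move=> x Hx; rewrite V12_blk; apply: imset_f.
set hv := fun j => ((hval f a3 b j)%:R : R).
set q := [seq u / (N%:R : R) | u <- hvec f R c a3 b].
set m := (Mnum f c a3 b - #|V12 f a3 b|)%N.
set q' := [seq u / (N%:R : R) | u <- map hv (enum (V12 f a3 b)) ++ nseq m 0].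
have Hqq' : perm_eq q q'.
  apply: perm_map; rewrite /hvec perm_cat2r.
  exact: (permEl (perm_sort _ _)).
have Hq'nn : all (fun x => 0 <= x) q'.
  apply/allP => x /mapP[u Hu ->]; apply: divr_ge0 => //.
  move: Hu; rewrite mem_cat => /orP[/mapP[j _ ->]|/nseqP[-> _]] //.
split.
  rewrite size_map (perm_size Hs) size_map /hvec size_cat size_sort size_map size_nseq.
  by rewrite -cardE /m /Mnum subnKC.
split.
  move=> t _.
  rewrite /topsum sort_map -map_take big_map.
  set L' := take t _.
  have HuL : uniq L' by rewrite take_uniq // sort_uniq.
  have HsL : (size L' <= t)%N by rewrite size_take_min geq_minl.
  set S' := [set x in A123 f b a3 | label c x \in L'].
  set G := blk f a3 @: S'.
  have HG : G \subset V12 f a3 b.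
    by apply/subsetP => j /imsetP[x]; rewrite inE => /andP[Hx _] ->; apply: HVsub.
  have HGt : (#|G| <= t)%N by apply: leq_trans (CL _ _ _ Hzero) HsL.
  have Hsum1 : \sum_(l <- L') F l = (#|S'|%:R) / (N%:R : R).
    by rewrite /F -mulr_suml -natr_sum (E1 _ _ _ _ HuL).
  have HS'G : (#|S'| <= \sum_(j in G) hval f a3 b j)%N.
    rewrite (E2 HG); apply: subset_leq_card; apply/subsetP => x.
    rewrite !inE => /andP[Hx HxL]; rewrite Hx /=.
    by apply: imset_f; rewrite !inE Hx.
  set u := [seq x / (N%:R : R) | x <- map hv [seq j <- enum (V12 f a3 b) | j \in G]].
  have Hu : \sum_(x <- u) x = (\sum_(j in G) hval f a3 b j)%:R / (N%:R : R).
    rewrite big_map big_map big_filter big_enum_cond /= natr_sum mulr_suml.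
    apply: eq_bigl => j; rewrite andbC; apply/andP/idP => [[]//|Hj]; split => //.
    exact: (subsetP HG).
  apply: le_trans (_ : \sum_(x <- u) x <= _).
    rewrite Hsum1 Hu ler_pM2r ?invr_gt0 ?ltr0n // ler_nat //.
  apply: (@topsum_ge R t q q' _ Hq'nn Hqq').
    apply: map_subseq; apply: subseq_trans (prefix_subseq _ (nseq m 0)).
    exact/map_subseq/filter_subseq.
  have Hpe : perm_eq [seq j <- enum (V12 f a3 b) | j \in G] (enum G).
    apply: uniq_perm; [exact/filter_uniq/enum_uniq | exact: enum_uniq |].
    move=> j; rewrite mem_filter !mem_enum; apply/andP/idP => [[]//|Hj]; split=> //.
    exact: (subsetP HG).
  by rewrite !size_map (perm_size Hpe) -cardE.
have -> : \sum_(x <- map F s) x = N%:R / N%:R.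
  rewrite big_map (perm_big _ Hs) /F -mulr_suml -natr_sum (E1 _ _ _ _ Hulabs).
  by rewrite -/labs HA.
rewrite (perm_big _ Hqq') /q' map_cat big_cat /=.
have Hz0 : forall n (d : R), \sum_(x <- [seq u / d | u <- nseq n 0]) x = 0.
  by move=> n d; elim: n => [|n IH]; rewrite ?big_nil // /= big_cons IH mul0r addr0.
rewrite Hz0 addr0.
rewrite !big_map big_enum /= /hv -mulr_suml -natr_sum (E2 (subxx _)).
congr (_%:R / _); apply: eq_card => x; rewrite [in RHS]inE.
by case Hx: (x \in A123 f b a3) => //=; rewrite HVsub.
Qed.
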